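(* For all $n\ge1$: $T_{nn}=U_{n,n+1}=-1$, $T_{n0}=(-1)^{n+1}4n$, $U_{n0}=(-1)^{n+1}4(2n-1)$. Moreover $T_{nj}\ne0$ only when $0\le j\le n$, and $U_{nj}\ne0$ only when $0\le j\le n+1$.
   Context: The numbers $T_{nj},U_{nj}$ (integers $n\ge0$, $j$) are defined by: $T_{nj}=U_{nj}=0$ whenever $j<0$; $T_{0j}=0$ for all $j\ge1$, $U_{01}=-1$, $U_{0j}=0$ for all $j\ge2$; $T_{10}=4$, $U_{10}=4$; and for all $n\ge1$, $j\ge0$ with $(n,j)\ne(1,0)$: $T_{nj}=-3T_{n-1,j}+U_{n-1,j}$ and $U_{nj}=-4T_{n-1,j}+U_{n-1,j}+T_{n,j-1}$. *)

(* Defs.v *)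
From mathcomp Require Import all_boot all_order all_algebra.
Set Implicit Arguments. Unset Strict Implicit. Unset Printing Implicit Defensive.
Import Order.TTheory GRing.Theory Num.Theory.
Local Open Scope ring_scope.

(* The defining conditions of the arrays T_{nj}, U_{nj} (n : nat, j : int).
   T_{00} and U_{00} are not specified by the source and are left free. *)
Definition TU_spec (T U : nat -> int -> int) : Prop :=
  (forall n (j : int), j < 0 -> T n j = 0 /\ U n j = 0) /\
      (forall j : int, 1 <= j -> T 0%N j = 0) /\
      U 0%N 1 = -1 /\
      (forall j : int, 2 <= j -> U 0%N j = 0) /\
      T 1%N 0 = 4 /\ U 1%N 0 = 4 /\
      (forall (n : nat) (j : int), 0 <= j -> ~ (n = 0%N /\ j = 0) ->
         T n.+1 j = -3 * T n j + U n j /\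
         U n.+1 j = -4 * T n j + U n j + T n.+1 (j - 1)).

(* Main.v *)
Require Import Defs.
From mathcomp Require Import all_boot all_order all_algebra.
From mathcomp Require Import zify ring.
Import Order.TTheory GRing.Theory Num.Theory.
Local Open Scope ring_scope.

Lemma aux (T U : nat -> int -> int) (hTU : TU_spec T U) (n : nat) :
  T n.+1 (n.+1%:Z) = -1 /\ U n.+1 (n.+1%:Z + 1) = -1 /\
  T n.+1 0 = (-1) ^+ n.+2 * (4 * n.+1%:Z) /\
  U n.+1 0 = (-1) ^+ n.+2 * (4 * (2 * n.+1%:Z - 1)) /\
  (forall j : int, n.+1%:Z < j -> T n.+1 j = 0) /\
  (forall j : int, n.+1%:Z + 1 < j -> U n.+1 j = 0).
Proof.
case: hTU => [Hneg [HT0 [HU01 [HU0 [HT10 [HU10 Hrec]]]]]].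
elim: n => [|n IH].
  have T11 : T 1%N 1 = -1.
    have [-> _] := Hrec 0%N 1 isT ltac:(case=> _ //).
    by rewrite HT0 // HU01.
  have T1j : forall j : int, 1 < j -> T 1%N j = 0.
    move=> j hj; have [-> _] := Hrec 0%N j ltac:(lia) ltac:(case=> _; lia).
    rewrite HT0 ?HU0; lia.
  split; first exact T11.
  split.
    have [_ ->] := Hrec 0%N 2 isT ltac:(case=> _ //).
    by rewrite HT0 // HU0 //= T11.
  split; first by rewrite HT10 expr2 /=; ring.
  split; first by rewrite HU10 expr2 /=; ring.
  split; first exact T1j.
  move=> j hj; have [_ ->] := Hrec 0%N j ltac:(lia) ltac:(case=> _; lia).
  rewrite HT0 ?HU0 ?T1j; lia.
case: IH => [Tnn [Unn [Tn0 [Un0 [TS US]]]]].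
have ne : forall j : int, ~ (n.+1 = 0%N /\ j = 0) by move=> j [].
have Tnew : forall j : int, n.+2%:Z < j -> T n.+2 j = 0.
  move=> j hj; have [-> _] := Hrec n.+1 j ltac:(lia) (ne j).
  rewrite TS ?US; lia.
split.
  have [-> _] := Hrec n.+1 n.+2 ltac:(lia) (ne _).
  have -> : T n.+1 n.+2 = 0 by apply: TS; lia.
  rewrite -Unn mulr0 add0r; congr (U _ _); lia.
split.
  have [_ ->] := Hrec n.+1 (n.+2%:Z + 1) ltac:(lia) (ne _).
  rewrite TS ?US; try lia.
  have -> : n.+2%:Z + 1 - 1 = n.+2%:Z by lia.
  have [-> _] := Hrec n.+1 n.+2 ltac:(lia) (ne _).
  have -> : T n.+1 n.+2 = 0 by apply: TS; lia.
  rewrite -Unn mulr0 add0r; have -> : n.+2%:Z = n.+1%:Z + 1 by lia.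
  lia.
split.
  have [-> _] := Hrec n.+1 0 ltac:(lia) (ne _).
  rewrite Tn0 Un0 !exprS.
  have h2 : n.+2%:Z = n%:Z + 2 by lia.
  have h1 : n.+1%:Z = n%:Z + 1 by lia.
  rewrite h2 h1; ring.
split.
  have [_ ->] := Hrec n.+1 0 ltac:(lia) (ne _).
  have ->: T n.+2 (0 - 1) = 0 by case: (Hneg n.+2 (0 - 1) ltac:(lia)).
  rewrite Tn0 Un0 !exprS.
  have h2 : n.+2%:Z = n%:Z + 2 by lia.
  have h1 : n.+1%:Z = n%:Z + 1 by lia.
  rewrite h2 h1; ring.
split; first exact Tnew.
move=> j hj; have [_ ->] := Hrec n.+1 j ltac:(lia) (ne j).
rewrite TS ?US ?Tnew; lia.
Qed.

Theorem lemma8p2 (T U : nat -> int -> int) (hTU : TU_spec T U) (n : nat)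
    (hn : (1 <= n)%N) :
  T n (n%:Z) = -1 /\ U n (n%:Z + 1) = -1 /\
  T n 0 = (-1) ^+ n.+1 * (4 * n%:Z) /\
  U n 0 = (-1) ^+ n.+1 * (4 * (2 * n%:Z - 1)) /\
  (forall j : int, T n j != 0 -> 0 <= j <= n%:Z) /\
  (forall j : int, U n j != 0 -> 0 <= j <= n%:Z + 1).
Proof.
case: n hn => [//|n] _.
have [A [B [C [D [E F]]]]] := @aux T U hTU n.
have Hneg := proj1 hTU.
do 4 (split; first done).
split.
  move=> j /eqP hj; apply/andP; split.
    case: (leP 0 j) => // h; exfalso; apply: hj; exact: (proj1 (Hneg _ _ h)).
  case: (leP j n.+1%:Z) => // h; exfalso; apply: hj; exact: E.
move=> j /eqP hj; apply/andP; split.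
  case: (leP 0 j) => // h; exfalso; apply: hj; exact: (proj2 (Hneg _ _ h)).
case: (leP j (n.+1%:Z + 1)) => // h; exfalso; apply: hj; exact: F.
Qed.
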